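(* Let $m\ge1$ be an integer and $\mu=\lfloor m/3\rfloor$. The group $\mathbb{Z}_m$ contains $\mu$ additively disjoint pairs if and only if $m\not\equiv 6\pmod{12}$. If $m\equiv 6\pmod{12}$, then the maximum number of additively disjoint pairs in $\mathbb{Z}_m$ is $\mu-1$.
   Context: For a finite abelian group $A$, a family of $n$ additively disjoint pairs in $A$ is a family $(a_i,b_i)\in A^2$, $1\le i\le n$, such that the $3n$ elements $a_1,b_1,\ldots,a_n,b_n,a_1+b_1,\ldots,a_n+b_n$ are pairwise distinct. $A$ is called maximally additively disjoint (MAD) if it contains $\lfloor |A|/3\rfloor$ additively disjoint pairs. *)

(* Defs.v *)
From mathcomp Require Import all_boot all_algebra.
Set Implicit Arguments. Unset Strict Implicit. Unset Printing Implicit Defensive.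
Import GRing.Theory.
Local Open Scope ring_scope.

Definition add_disjoint (A : zmodType) (s : seq (A * A)) : bool :=
  uniq ([seq p.1 | p <- s] ++ [seq p.2 | p <- s] ++ [seq p.1 + p.2 | p <- s]).

Definition has_ad_pairs (A : zmodType) (n : nat) : Prop :=
  exists s : seq (A * A), size s = n /\ add_disjoint s.

(* The cyclic group Z_m for m >= 1, as 'I_m with its additive group structure
   (m = k.+1 so that 'I_k.+1 is canonically a zmodType; this is correct also for m = 1). *)
Notation Zm m := ('I_(m.-1).+1 : zmodType) (only parsing).

(* Main.v *)
Require Import Defs.
From mathcomp Require Import all_boot all_algebra.
From mathcomp Require Import zify.
Set Implicit Arguments. Unset Strict Implicit. Unset Printing Implicit Defensive.


Lemma core (p : nat) (L : seq (nat * nat * nat)) :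
  all (fun t => (t.1.1 + t.1.2) %% p.+1 == t.2 %% p.+1) L ->
  uniq [seq x %% p.+1 | x <- [seq t.1.1 | t <- L] ++ [seq t.1.2 | t <- L] ++ [seq t.2 | t <- L]] ->
  has_ad_pairs ('I_p.+1 : zmodType) (size L).
Proof.
move=> hs hu.
pose s := [seq ((inZp t.1.1 : 'I_p.+1), (inZp t.1.2 : 'I_p.+1)) | t <- L].
exists s; split; first by rewrite size_map.
rewrite /add_disjoint -(map_inj_uniq val_inj) !map_cat.
have E1 : [seq val x | x <- [seq q.1 | q <- s]] = [seq t.1.1 %% p.+1 | t <- L].
  by rewrite -!map_comp.
have E2 : [seq val x | x <- [seq q.2 | q <- s]] = [seq t.1.2 %% p.+1 | t <- L].
  by rewrite -!map_comp.
have E3 : [seq val x | x <- [seq (q.1 + q.2)%R | q <- s]] = [seq t.2 %% p.+1 | t <- L].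
  rewrite -!map_comp; apply/eq_in_map => t /(allP hs) /eqP <- /=.
  by rewrite modnDm.
by rewrite E1 E2 E3; move: hu; rewrite !map_cat -!map_comp.
Qed.


Definition comp (r : nat) (t : nat * nat * nat) : nat :=
  if r == 0 then t.1.1 else if r == 1 then t.1.2 else t.2.

Lemma fcore p n (f : nat -> nat * nat * nat) :
  (forall i, i < n -> ((f i).1.1 + (f i).1.2) %% p.+1 = (f i).2 %% p.+1) ->
  (forall i j r r', i < n -> j < n -> r < 3 -> r' < 3 ->
      comp r (f i) %% p.+1 = comp r' (f j) %% p.+1 -> i = j /\ r = r') ->
  has_ad_pairs ('I_p.+1 : zmodType) n.
Proof.
move=> hs hi.
have -> : n = size (map f (iota 0 n)) by rewrite size_map size_iota.
apply: core.
  apply/allP => t /mapP [i]; rewrite mem_iota add0n => /andP [_ lin] ->.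
  by apply/eqP; apply: hs.
pose g (q : nat * nat) := comp q.1 (f q.2) %% p.+1.
pose I := [seq (0, i) | i <- iota 0 n] ++ [seq (1, i) | i <- iota 0 n] ++ [seq (2, i) | i <- iota 0 n].
have -> : [seq x %% p.+1 | x <- [seq t.1.1 | t <- map f (iota 0 n)] ++
     [seq t.1.2 | t <- map f (iota 0 n)] ++ [seq t.2 | t <- map f (iota 0 n)]] = map g I.
  by rewrite !map_cat -!map_comp.
have memI : forall q, q \in I -> q.1 < 3 /\ q.2 < n.
  move=> [r i]; rewrite !mem_cat => /or3P [] /mapP [j];
    rewrite mem_iota add0n => /andP [_ hj] [-> ->]; by split.
rewrite map_inj_in_uniq.
  rewrite !cat_uniq !map_inj_uniq ?iota_uniq; last 3 first.
  - by move=> x y [].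
  - by move=> x y [].
  - by move=> x y [].
  rewrite /=; apply/and3P; split => //.
    rewrite has_cat negb_or; apply/andP; split; apply/hasPn => q /mapP [i _ ->];
      by apply/mapP => [[j _ []]].
  by apply/hasPn => q /mapP [i _ ->]; apply/mapP => [[j _ []]].
move=> [r i] [r' j] /memI [hr hi'] /memI [hr' hj]. simpl in *.
by rewrite /g /= => /(hi _ _ _ _ hi' hj hr hr') [-> ->].
Qed.

Lemma modeq M v w : 0 < v <= M -> 0 < w <= M -> v %% M = w %% M -> v = w.
Proof.
move=> /andP [v0 vM] /andP [w0 wM].
case: (ltngtP v M) vM => // [vlt|veq] _; case: (ltngtP w M) wM => // [wlt|weq] _.
- by rewrite !modn_small.
- by rewrite weq modnn modn_small // => h; lia.
- by rewrite veq modnn modn_small // => h; lia.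
- by rewrite veq weq.
Qed.

Lemma lang p n t (a b : nat -> nat) :
  (forall i, i < n -> [/\ 0 < a i, a i < b i, b i - a i <= t & t + b i <= p.+1]) ->
  (forall i j, i < n -> j < n -> b i - a i = b j - a j -> i = j) ->
  (forall i j, i < n -> j < n -> a i = a j -> i = j) ->
  (forall i j, i < n -> j < n -> b i = b j -> i = j) ->
  (forall i j, i < n -> j < n -> a i <> b j) ->
  has_ad_pairs ('I_p.+1 : zmodType) n.
Proof.
move=> hb hd ha hbb hab.
apply: (@fcore p n (fun i => (b i - a i, t + a i, t + b i))).
  move=> i /hb [h1 h2 h3 h4] /=; congr (_ %% _); lia.
move=> i j r r' hi hj hr hr'.
have [i1 i2 i3 i4] := hb i hi; have [j1 j2 j3 j4] := hb j hj.
have rng : forall q x, q < 3 -> x < n -> 0 < comp q (b x - a x, t + a x, t + b x) <= p.+1.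
  move=> q x hq hx; have [x1 x2 x3 x4] := hb x hx.
  by case: q hq => [|[|[|q]]] //= _; rewrite /comp /=; lia.
move=> /(modeq (rng _ _ hr hi) (rng _ _ hr' hj)).
have := hd i j hi hj; have := ha i j hi hj; have := hbb i j hi hj;
have := hab i j hi hj; have := hab j i hj hi.
by case: r hr => [|[|[|r]]] // _; case: r' hr' => [|[|[|r']]] // _; rewrite /comp /=; lia.
Qed.

Lemma lang0 p n t h (a b : nat -> nat) :
  (forall i, i < n -> [/\ 0 < a i, a i < b i, b i - a i < t & t + b i < p.+1]) ->
  (forall i j, i < n -> j < n -> b i - a i = b j - a j -> i = j) ->
  (forall i j, i < n -> j < n -> a i = a j -> i = j) ->
  (forall i j, i < n -> j < n -> b i = b j -> i = j) ->
  (forall i j, i < n -> j < n -> a i <> b j) ->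
  (forall i, i < n -> a i <> h /\ b i <> h) ->
  0 < h -> 0 < t -> t + (t + h) = p.+1 ->
  has_ad_pairs ('I_p.+1 : zmodType) n.+1.
Proof.
move=> hb hd ha hbb hab hh h0 t0 htm.
pose f i := if i < n then (b i - a i, t + a i, t + b i) else (t, t + h, 0).
apply: (@fcore p n.+1 f).
  move=> i; rewrite ltnS /f; case: (ltnP i n) => [hi _ | hi _] /=.
    have [h1 h2 h3 h4] := hb i hi; congr (_ %% _); lia.
  by rewrite htm modnn mod0n.
have rng : forall q x, q < 3 -> x < n.+1 -> comp q (f x) < p.+1.
  move=> q x hq hx; rewrite /f; case: (ltnP x n) => hxn.
    have [x1 x2 x3 x4] := hb x hxn.
    by case: q hq => [|[|[|q]]] //= _; rewrite /comp /=; lia.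
  by case: q hq => [|[|[|q]]] //= _; rewrite /comp /=; lia.
move=> i j r r' hi hj hr hr'.
rewrite (modn_small (rng _ _ hr hi)) (modn_small (rng _ _ hr' hj)).
rewrite /f; case: (ltnP i n) => hin; case: (ltnP j n) => hjn.
- have [i1 i2 i3 i4] := hb i hin; have [j1 j2 j3 j4] := hb j hjn.
  have := hd i j hin hjn; have := ha i j hin hjn; have := hbb i j hin hjn;
  have := hab i j hin hjn; have := hab j i hjn hin.
  by case: r hr => [|[|[|r]]] // _; case: r' hr' => [|[|[|r']]] // _; rewrite /comp /=; lia.
- have [i1 i2 i3 i4] := hb i hin; have [hi1 hi2] := hh i hin.
  by case: r hr => [|[|[|r]]] // _; case: r' hr' => [|[|[|r']]] // _; rewrite /comp /=; lia.
- have [j1 j2 j3 j4] := hb j hjn; have [hj1 hj2] := hh j hjn.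
  by case: r hr => [|[|[|r]]] // _; case: r' hr' => [|[|[|r']]] // _; rewrite /comp /=; lia.
- by case: r hr => [|[|[|r]]] // _; case: r' hr' => [|[|[|r']]] // _; rewrite /comp /=; lia.
Qed.

Lemma step3 p k : p.+1 = 3 * (2 * k + 1) -> has_ad_pairs ('I_p.+1 : zmodType) (2 * k + 1).
Proof.
move=> hp.
pose f i := (3 * i + 1, 3 * i + 2, if 6 * i + 3 < p.+1 then 6 * i + 3 else 6 * i + 3 - p.+1).
apply: (@fcore p _ f).
  move=> i hi; rewrite /f /=; case: (ltnP (6 * i + 3) p.+1) => h.
    by congr (_ %% _); lia.
  have -> : 3 * i + 1 + (3 * i + 2) = (6 * i + 3 - p.+1) + p.+1 by lia.
  by rewrite modnDr.
have rng : forall q x, q < 3 -> x < 2 * k + 1 -> comp q (f x) < p.+1.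
  move=> q x hq hx; rewrite /f.
  by case: q hq => [|[|[|q]]] //= _; rewrite /comp /=; case: (ltnP (6 * x + 3) p.+1); lia.
move=> i j r r' hi hj hr hr'.
rewrite (modn_small (rng _ _ hr hi)) (modn_small (rng _ _ hr' hj)).
rewrite /f.
by case: r hr => [|[|[|r]]] // _; case: r' hr' => [|[|[|r']]] // _; rewrite /comp /=;
  case: (ltnP (6 * i + 3) p.+1); case: (ltnP (6 * j + 3) p.+1); lia.
Qed.


Ltac dif := repeat match goal with |- context [if ?c then _ else _] => let H := fresh "H" in case: (boolP c) => H end.
Definition S0a (s i : nat) : nat :=
  if i < 2*s then 4*s+(i+1)-1 else if i < 2*s+(s-2) then ((i-(2*s))+1) else if i < 2*s+(s-2)+(s-2) then s+((i-(2*s+(s-2)))+1)+1 else if i < 2*s+(s-2)+(s-2)+(1) then s-1 else if i < 2*s+(s-2)+(s-2)+(1)+(1) then s else if i < 2*s+(s-2)+(s-2)+(1)+(1)+(1) then 2*s else 2*s+1.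
Definition S0b (s i : nat) : nat :=
  if i < 2*s then 8*s-(i+1)+1 else if i < 2*s+(s-2) then 4*s-((i-(2*s))+1)-1 else if i < 2*s+(s-2)+(s-2) then 3*s-((i-(2*s+(s-2)))+1) else if i < 2*s+(s-2)+(s-2)+(1) then 3*s else if i < 2*s+(s-2)+(s-2)+(1)+(1) then s+1 else if i < 2*s+(s-2)+(s-2)+(1)+(1)+(1) then 4*s-1 else 6*s.
Definition S1a (s i : nat) : nat :=
  if i < 2*s then 4*s+(i+1)+1 else if i < 2*s+(s) then ((i-(2*s))+1) else if i < 2*s+(s)+(s-2) then s+2+((i-(2*s+(s)))+1) else if i < 2*s+(s)+(s-2)+(1) then s+1 else if i < 2*s+(s)+(s-2)+(1)+(1) then 2*s+1 else 2*s+2.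
Definition S1b (s i : nat) : nat :=
  if i < 2*s then 8*s-(i+1)+3 else if i < 2*s+(s) then 4*s-((i-(2*s))+1)+1 else if i < 2*s+(s)+(s-2) then 3*s+1-((i-(2*s+(s)))+1) else if i < 2*s+(s)+(s-2)+(1) then s+2 else if i < 2*s+(s)+(s-2)+(1)+(1) then 6*s+2 else 4*s+1.
Definition H2a (s i : nat) : nat :=
  if i < 2*s+1 then (i+1) else if i < 2*s+1+(1) then 2*s+2 else if i < 2*s+1+(1)+(s-2) then 4*s+3+((i-(2*s+1+(1)))+1) else if i < 2*s+1+(1)+(s-2)+(s) then 5*s+1+((i-(2*s+1+(1)+(s-2)))+1) else if i < 2*s+1+(1)+(s-2)+(s)+(1) then 6*s+2 else 7*s+4.
Definition H2b (s i : nat) : nat :=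
  if i < 2*s+1 then 4*s+4-(i+1) else if i < 2*s+1+(1) then 6*s+3 else if i < 2*s+1+(1)+(s-2) then 8*s+4-((i-(2*s+1+(1)))+1) else if i < 2*s+1+(1)+(s-2)+(s) then 7*s+4-((i-(2*s+1+(1)+(s-2)))+1) else if i < 2*s+1+(1)+(s-2)+(s)+(1) then 8*s+5 else 7*s+5.
Definition R3a (s i : nat) : nat :=
  if i < 2*s+1 then (i+1) else if i < 2*s+1+(1) then 2*s+2 else if i < 2*s+1+(1)+(s-1) then 4*s+4+((i-(2*s+1+(1)))+1) else if i < 2*s+1+(1)+(s-1)+(s) then 5*s+3+((i-(2*s+1+(1)+(s-1)))+1) else if i < 2*s+1+(1)+(s-1)+(s)+(1) then 6*s+4 else 7*s+6.
Definition R3b (s i : nat) : nat :=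
  if i < 2*s+1 then 4*s+4-(i+1) else if i < 2*s+1+(1) then 6*s+5 else if i < 2*s+1+(1)+(s-1) then 8*s+7-((i-(2*s+1+(1)))+1) else if i < 2*s+1+(1)+(s-1)+(s) then 7*s+6-((i-(2*s+1+(1)+(s-1)))+1) else if i < 2*s+1+(1)+(s-1)+(s)+(1) then 8*s+7 else 7*s+7.

Lemma S0_ok s : 2 <= s -> forall i, i < 4*s -> [/\ 0 < S0a s i, S0a s i < S0b s i, S0b s i - S0a s i <= 4*s & S0b s i <= 8*s].
Proof. move=> hs i hi; rewrite /S0a /S0b; dif; split; lia. Qed.
Lemma S0_inj1 s : 2 <= s -> forall i j, i < 4*s -> j < 4*s -> S0b s i - S0a s i = S0b s j - S0a s j -> i = j.
Proof. move=> hs i j hi hj; rewrite /S0a /S0b; dif; lia. Qed.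
Lemma S0_inj2 s : 2 <= s -> forall i j, i < 4*s -> j < 4*s -> S0a s i = S0a s j -> i = j.
Proof. move=> hs i j hi hj; rewrite /S0a /S0b; dif; lia. Qed.
Lemma S0_inj3 s : 2 <= s -> forall i j, i < 4*s -> j < 4*s -> S0b s i = S0b s j -> i = j.
Proof. move=> hs i j hi hj; rewrite /S0a /S0b; dif; lia. Qed.
Lemma S0_inj4 s : 2 <= s -> forall i j, i < 4*s -> j < 4*s -> S0a s i <> S0b s j.
Proof. move=> hs i j hi hj; rewrite /S0a /S0b; dif; lia. Qed.
Lemma S0_pairs s p t : 2 <= s -> 4*s <= t -> t + (8*s) <= p.+1 -> has_ad_pairs ('I_p.+1 : zmodType) (4*s).
Proof.
move=> hs ht hp; apply: (@lang p _ t (S0a s) (S0b s)).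
- by move=> i hi; have [h1 h2 h3 h4] := S0_ok hs hi; split => //; lia.
- by move=> i j hi hj; apply: S0_inj1.
- by move=> i j hi hj; apply: S0_inj2.
- by move=> i j hi hj; apply: S0_inj3.
- by move=> i j hi hj; apply: S0_inj4.
Qed.

Lemma S1_ok s : 2 <= s -> forall i, i < 4*s+1 -> [/\ 0 < S1a s i, S1a s i < S1b s i, S1b s i - S1a s i <= 4*s+1 & S1b s i <= 8*s+2].
Proof. move=> hs i hi; rewrite /S1a /S1b; dif; split; lia. Qed.
Lemma S1_inj1 s : 2 <= s -> forall i j, i < 4*s+1 -> j < 4*s+1 -> S1b s i - S1a s i = S1b s j - S1a s j -> i = j.
Proof. move=> hs i j hi hj; rewrite /S1a /S1b; dif; lia. Qed.
Lemma S1_inj2 s : 2 <= s -> forall i j, i < 4*s+1 -> j < 4*s+1 -> S1a s i = S1a s j -> i = j.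
Proof. move=> hs i j hi hj; rewrite /S1a /S1b; dif; lia. Qed.
Lemma S1_inj3 s : 2 <= s -> forall i j, i < 4*s+1 -> j < 4*s+1 -> S1b s i = S1b s j -> i = j.
Proof. move=> hs i j hi hj; rewrite /S1a /S1b; dif; lia. Qed.
Lemma S1_inj4 s : 2 <= s -> forall i j, i < 4*s+1 -> j < 4*s+1 -> S1a s i <> S1b s j.
Proof. move=> hs i j hi hj; rewrite /S1a /S1b; dif; lia. Qed.
Lemma S1_pairs s p t : 2 <= s -> 4*s+1 <= t -> t + (8*s+2) <= p.+1 -> has_ad_pairs ('I_p.+1 : zmodType) (4*s+1).
Proof.
move=> hs ht hp; apply: (@lang p _ t (S1a s) (S1b s)).
- by move=> i hi; have [h1 h2 h3 h4] := S1_ok hs hi; split => //; lia.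
- by move=> i j hi hj; apply: S1_inj1.
- by move=> i j hi hj; apply: S1_inj2.
- by move=> i j hi hj; apply: S1_inj3.
- by move=> i j hi hj; apply: S1_inj4.
Qed.

Lemma H2_ok s : 2 <= s -> forall i, i < 4*s+2 -> [/\ 0 < H2a s i, H2a s i < H2b s i, H2b s i - H2a s i <= 4*s+2 & H2b s i <= 8*s+5].
Proof. move=> hs i hi; rewrite /H2a /H2b; dif; split; lia. Qed.
Lemma H2_inj1 s : 2 <= s -> forall i j, i < 4*s+2 -> j < 4*s+2 -> H2b s i - H2a s i = H2b s j - H2a s j -> i = j.
Proof. move=> hs i j hi hj; rewrite /H2a /H2b; dif; lia. Qed.
Lemma H2_inj2 s : 2 <= s -> forall i j, i < 4*s+2 -> j < 4*s+2 -> H2a s i = H2a s j -> i = j.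
Proof. move=> hs i j hi hj; rewrite /H2a /H2b; dif; lia. Qed.
Lemma H2_inj3 s : 2 <= s -> forall i j, i < 4*s+2 -> j < 4*s+2 -> H2b s i = H2b s j -> i = j.
Proof. move=> hs i j hi hj; rewrite /H2a /H2b; dif; lia. Qed.
Lemma H2_inj4 s : 2 <= s -> forall i j, i < 4*s+2 -> j < 4*s+2 -> H2a s i <> H2b s j.
Proof. move=> hs i j hi hj; rewrite /H2a /H2b; dif; lia. Qed.
Lemma H2_pairs s p t : 2 <= s -> 4*s+2 <= t -> t + (8*s+5) <= p.+1 -> has_ad_pairs ('I_p.+1 : zmodType) (4*s+2).
Proof.
move=> hs ht hp; apply: (@lang p _ t (H2a s) (H2b s)).
- by move=> i hi; have [h1 h2 h3 h4] := H2_ok hs hi; split => //; lia.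
- by move=> i j hi hj; apply: H2_inj1.
- by move=> i j hi hj; apply: H2_inj2.
- by move=> i j hi hj; apply: H2_inj3.
- by move=> i j hi hj; apply: H2_inj4.
Qed.

Lemma R3_ok s : 1 <= s -> forall i, i < 4*s+3 -> [/\ 0 < R3a s i, R3a s i < R3b s i, R3b s i - R3a s i <= 4*s+3 & R3b s i <= 8*s+7].
Proof. move=> hs i hi; rewrite /R3a /R3b; dif; split; lia. Qed.
Lemma R3_inj1 s : 1 <= s -> forall i j, i < 4*s+3 -> j < 4*s+3 -> R3b s i - R3a s i = R3b s j - R3a s j -> i = j.
Proof. move=> hs i j hi hj; rewrite /R3a /R3b; dif; lia. Qed.
Lemma R3_inj2 s : 1 <= s -> forall i j, i < 4*s+3 -> j < 4*s+3 -> R3a s i = R3a s j -> i = j.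
Proof. move=> hs i j hi hj; rewrite /R3a /R3b; dif; lia. Qed.
Lemma R3_inj3 s : 1 <= s -> forall i j, i < 4*s+3 -> j < 4*s+3 -> R3b s i = R3b s j -> i = j.
Proof. move=> hs i j hi hj; rewrite /R3a /R3b; dif; lia. Qed.
Lemma R3_inj4 s : 1 <= s -> forall i j, i < 4*s+3 -> j < 4*s+3 -> R3a s i <> R3b s j.
Proof. move=> hs i j hi hj; rewrite /R3a /R3b; dif; lia. Qed.
Lemma R3_pairs s p t : 1 <= s -> 4*s+3 <= t -> t + (8*s+7) <= p.+1 -> has_ad_pairs ('I_p.+1 : zmodType) (4*s+3).
Proof.
move=> hs ht hp; apply: (@lang p _ t (R3a s) (R3b s)).
- by move=> i hi; have [h1 h2 h3 h4] := R3_ok hs hi; split => //; lia.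
- by move=> i j hi hj; apply: R3_inj1.
- by move=> i j hi hj; apply: R3_inj2.
- by move=> i j hi hj; apply: R3_inj3.
- by move=> i j hi hj; apply: R3_inj4.
Qed.

Lemma R3_hole s : 1 <= s -> forall i, i < 4*s+3 -> R3a s i <> 4*s+4 /\ R3b s i <> 4*s+4.
Proof. move=> hs i hi; rewrite /R3a /R3b; dif; split; lia. Qed.

Lemma R3_pairs0 s p : 1 <= s -> p.+1 = 12*s+12 -> has_ad_pairs ('I_p.+1 : zmodType) (4*s+4).
Proof.
move=> hs hp; have -> : 4*s+4 = (4*s+3).+1 by lia.
apply: (@lang0 p _ (4*s+4) (4*s+4) (R3a s) (R3b s)); try lia.
- by move=> i hi; have [h1 h2 h3 h4] := R3_ok hs hi; split => //; lia.
- by move=> i j hi hj; apply: R3_inj1.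
- by move=> i j hi hj; apply: R3_inj2.
- by move=> i j hi hj; apply: R3_inj3.
- by move=> i j hi hj; apply: R3_inj4.
- by move=> i hi; apply: R3_hole.
Qed.


Definition allv (p : nat) (s : seq ('I_p.+1 * 'I_p.+1)) : seq 'I_p.+1 :=
  [seq q.1 | q <- s] ++ [seq q.2 | q <- s] ++ [seq (q.1 + q.2)%R | q <- s].

Lemma bound p n : has_ad_pairs ('I_p.+1 : zmodType) n -> 3 * n <= p.+1.
Proof.
move=> [s [hs hu]].
have := max_card (mem (allv s)); rewrite card_ord (card_uniqP hu).
by rewrite /allv !size_cat !size_map hs; lia.
Qed.

Lemma bin2_odd j : odd 'C(12 * j + 6, 2).
Proof.
rewrite bin2 -divn2.
have -> : (12 * j + 6) * (12 * j + 6).-1 = 2 * ((6 * j + 3) * (12 * j + 5)).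
  have -> : (12 * j + 6).-1 = 12 * j + 5 by lia.
  by rewrite mulnA; congr (_ * _); lia.
rewrite mulKn //; have -> := oddM (6 * j + 3) (12 * j + 5). rewrite !oddD.
by case: (odd j).
Qed.

Lemma impossible p : p.+1 %% 12 = 6 -> ~ has_ad_pairs ('I_p.+1 : zmodType) (p.+1 %/ 3).
Proof.
move=> h6 [s [hs hu]].
set M := p.+1 in h6 hs *.
have hM : M = 12 * (M %/ 12) + 6 by rewrite {1}(divn_eq M 12) h6; lia.
set j := M %/ 12 in hM.
have hsize : size (allv s) = M by rewrite /allv !size_cat !size_map hs; lia.
have hall : (mem (allv s)) =i (mem [pred x : 'I_M | true]).
  apply/subset_cardP.
    by rewrite (card_uniqP hu) hsize /= cardT size_enum_ord.
  by apply/subsetP.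
have hperm : perm_eq (allv s) (enum 'I_M).
  apply: uniq_perm => //; first exact: enum_uniq.
  by move=> x; rewrite mem_enum; have := hall x; rewrite !inE.
have E1 : \sum_(x <- allv s) val x = 'C(M, 2).
  rewrite (perm_big _ hperm) /= -bin2_sum big_mkord.
  by rewrite -(big_map val xpredT (fun i => i)) /= val_enum_ord -(big_mkord xpredT (fun i => i)) /index_iota subn0.
have E2 : 2 %| \sum_(x <- allv s) val x.
  rewrite /allv !big_cat !big_map /=.
  rewrite (_ : _ + (_ + _) = \sum_(q <- s) (val q.1 + (val q.2 + (val q.1 + val q.2) %% p.+1))); last first.
    by rewrite !big_split.
  apply: dvdn_sum => q _.
  have hc : (val q.1 + val q.2) %% M %% 2 = (val q.1 + val q.2) %% 2.
    by apply: modn_dvdm; rewrite hM; apply/dvdnP; exists (6 * j + 3); lia.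
  move: hc; rewrite -/M; set c := (_ %% M); lia.
by move: E2; rewrite E1 hM dvdn2 bin2_odd.
Qed.


Lemma zero_pairs p : has_ad_pairs ('I_p.+1 : zmodType) 0.
Proof. by exists [::]. Qed.

Ltac smallc p L := exact: (@core p L isT isT).

Lemma exist_main p : p.+1 %% 12 != 6 -> has_ad_pairs ('I_p.+1 : zmodType) (p.+1 %/ 3).
Proof.
move=> h6.
have hdiv := divn_eq p.+1 12.
have hr : p.+1 %% 12 < 12 by rewrite ltn_pmod.
move: h6 hdiv hr; set r := p.+1 %% 12; set j := p.+1 %/ 12 => h6 hdiv hr.
have hmu : p.+1 %/ 3 = 4 * j + r %/ 3 by rewrite hdiv; lia.
rewrite hmu.
have : j = 0 \/ j = 1 \/ 2 <= j by lia.
case => [j0|[j1|jge]].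
- rewrite j0 in hdiv *.
  case: r hdiv h6 hr hmu => [|[|[|[|[|[|[|[|[|[|[|[|r]]]]]]]]]]]] //= hdiv _ _ _;
  move: hdiv; rewrite /= => /eqP; rewrite eqSS => /eqP ->.
  + exact: zero_pairs.
  + exact: zero_pairs.
  + exact: (@step3 2 0).
  + smallc 3 [:: (1,2,3)].
  + smallc 4 [:: (1,2,3)].
  + smallc 6 [:: (1, 2, 3); (5, 6, 4)].
  + smallc 7 [:: (1, 2, 3); (5, 7, 4)].
  + exact: (@step3 8 1).
  + smallc 9 [:: (1, 2, 3); (4, 6, 0); (7, 8, 5)].
  + smallc 10 [:: (1, 2, 3); (4, 5, 9); (7, 10, 6)].
- rewrite j1 in hdiv *.
  case: r hdiv h6 hr hmu => [|[|[|[|[|[|[|[|[|[|[|[|r]]]]]]]]]]]] //= hdiv _ _ _;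
  move: hdiv; rewrite /= => /eqP; rewrite !eqSS => /eqP ->.
  + smallc 11 [:: (1, 2, 3); (4, 6, 10); (5, 7, 0); (9, 11, 8)].
  + smallc 12 [:: (1, 2, 3); (4, 5, 9); (6, 7, 0); (10, 11, 8)].
  + smallc 13 [:: (1, 2, 3); (4, 5, 9); (6, 7, 13); (10, 12, 8)].
  + exact: (@step3 14 2).
  + smallc 15 [:: (1, 2, 3); (4, 5, 9); (6, 7, 13); (10, 14, 8); (12, 15, 11)].
  + smallc 16 [:: (1, 2, 3); (4, 5, 9); (6, 7, 13); (10, 15, 8); (12, 16, 11)].
  + smallc 18 [:: (1, 2, 3); (4, 5, 9); (6, 7, 13); (8, 11, 0); (12, 17, 10); (15, 18, 14)].
  + smallc 19 [:: (1, 2, 3); (4, 5, 9); (6, 7, 13); (8, 10, 18); (14, 17, 11); (16, 19, 15)].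
  + exact: (@step3 20 3).
  + by apply: (@R3_pairs 1 _ 7).
  + by apply: (@R3_pairs 1 _ 7).
- case: r hdiv h6 hr hmu => [|[|[|[|[|[|[|[|[|[|[|[|r]]]]]]]]]]]] //= hdiv _ _ _.
  + have -> : 4 * j + 0 = 4 * (j - 1) + 4 by lia.
    apply: R3_pairs0; lia.
  + have -> : 4 * j + 0 = 4 * j by lia. apply: (@S0_pairs j p (4 * j)); lia.
  + have -> : 4 * j + 0 = 4 * j by lia. apply: (@S0_pairs j p (4 * j)); lia.
  + have -> : 4 * j + 1 = 2 * (2 * j) + 1 by lia. apply: step3; lia.
  + apply: (@S1_pairs j p (4 * j + 1)); lia.
  + apply: (@S1_pairs j p (4 * j + 1)); lia.
  + apply: (@H2_pairs j p (4 * j + 2)); lia.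
  + apply: (@H2_pairs j p (4 * j + 2)); lia.
  + have -> : 4 * j + 3 = 2 * (2 * j + 1) + 1 by lia. apply: step3; lia.
  + apply: (@R3_pairs j p (4 * j + 3)); lia.
  + apply: (@R3_pairs j p (4 * j + 3)); lia.
Qed.

Lemma exist6 p : p.+1 %% 12 = 6 -> has_ad_pairs ('I_p.+1 : zmodType) (p.+1 %/ 3).-1.
Proof.
move=> h6.
have hdiv := divn_eq p.+1 12.
move: hdiv; rewrite h6; set j := p.+1 %/ 12 => hdiv.
have -> : (p.+1 %/ 3).-1 = 4 * j + 1 by rewrite hdiv; lia.
have : j = 0 \/ j = 1 \/ 2 <= j by lia.
case => [j0|[j1|jge]].
- rewrite j0 in hdiv *; move: hdiv => /= [->]; smallc 5 [:: (1, 2, 3)].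
- rewrite j1 in hdiv *; move: hdiv => /= [->].
  smallc 17 [:: (1, 2, 3); (4, 5, 9); (6, 7, 13); (8, 10, 0); (12, 17, 11)].
- apply: (@S1_pairs j p (4 * j + 1)); lia.
Qed.

Unset Implicit Arguments.

Theorem theorem9p2 (m : nat) (hm : (1 <= m)%N) :
  let mu := (m %/ 3)%N in
  (has_ad_pairs (Zm m) mu <-> (m %% 12 != 6)%N) /\
  ((m %% 12 = 6)%N ->
     has_ad_pairs (Zm m) mu.-1 /\
     (forall n : nat, has_ad_pairs (Zm m) n -> (n <= mu.-1)%N)).
Proof.
case: m hm => [//|p] _ /=.
split.
  split.
    by move=> h; apply/eqP => h6; exact: (impossible h6 h).
  exact: exist_main.
move=> h6; split; first exact: exist6.
move=> n hn.
have hb := bound hn.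
have hne : n <> p.+1 %/ 3 by move=> e; apply: (impossible h6); rewrite -e.
lia.
Qed.
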